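(* Fix $0<q<1$. For every $G\in\mathcal G$ with $G\ne E$, the equation $\bar G(t)=\frac1q\bar E(t)$ has a unique solution $t\in[0,\infty)$; this solution equals $T_q(G)$.
   Context: $E(t)=1-e^{-t}$ is the standard exponential cdf, $\bar E=1-E$, $\bar G=1-G$. $\mathcal G=\{E\#F:F$ a probability distribution on $[1,\infty)\}$, where $(E\#F)(t)=\int E(t/\mu)\,dF(\mu)$ (scale mixtures of exponentials with scales $\ge1$). FDR functional: $T_q(G)=\inf\{t:\bar G(t)\ge\frac1q\bar E(t)\}$. *)

(* Defs.v *)
From HB Require Import structures.
From mathcomp Require Import all_boot all_order all_algebra.
From mathcomp Require Import all_classical all_reals all_analysis.
Set Implicit Arguments. Unset Strict Implicit. Unset Printing Implicit Defensive.
Import Order.TTheory GRing.Theory Num.Theory.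
Local Open Scope classical_set_scope.
Local Open Scope ring_scope.

Definition Ecdf {R : realType} (t : R) : R := 1 - expR (- t).
Definition Ebar {R : realType} (t : R) : R := 1 - Ecdf t.

(* scale mixture (E # F)(t) = \int E(t/mu) dF(mu), F a probability measure on R
   (concentrated on [1,oo[ by hypothesis in the theorem) *)
Definition mixcdf {R : realType} (F : probability R R) (t : R) : R :=
  Rintegral F setT (fun mu => Ecdf (t / mu)).

Definition survival {R : realType} (G : R -> R) (t : R) : R := 1 - G t.

Definition Tq {R : realType} (q : R) (G : R -> R) : R :=
  inf [set t : R | q^-1 * Ebar t <= survival G t].

(* Main.v *)
Require Import Defs.
From HB Require Import structures.
From mathcomp Require Import all_boot all_order all_algebra.
From mathcomp Require Import all_classical all_reals all_analysis.
From mathcomp Require Import measurable_realfun ring lra.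
Import Order.TTheory GRing.Theory Num.Theory.
Import numFieldNormedType.Exports.
Local Open Scope classical_set_scope.
Local Open Scope ring_scope.
Lemma minv (R : realType) : measurable_fun [set: R] (fun x : R => x^-1).
Proof.
have -> : [set: R] = [set 0] `|` [set x | x != 0].
  apply/seteqP; split => x //= _; case: (eqVneq x 0) => [->|]; [left|right] => //.
apply/measurable_funU => //.
- apply: measurable_realfun.open_measurable; exact: open_neq.
split; first exact: measurable_fun_set1.
apply: measurable_realfun.open_continuous_measurable_fun; first exact: open_neq.
move=> x; rewrite inE /= => x0; exact: inv_continuous.
Qed.
Lemma pw (R : realType) (s t a : R) : s <= t -> 0 <= a -> a <= 1 ->
  expR (t * a) - expR (s * a) <= expR `|t| * (t - s).
Proof.
move=> st a0 a1.
have e1 : expR (s * a) = expR (t * a) * expR (- ((t - s) * a)).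
  by rewrite -expRD; congr expR; ring.
have h1 := expR_ge1Dx (- ((t - s) * a)).
have h2 : expR (t * a) <= expR `|t|.
  rewrite ler_expR (le_trans (ler_norm _)) //.
  by rewrite normrM (ger0_norm a0) ler_piMr.
have h3 := expR_gt0 (t * a).
have d0 : 0 <= (t - s) * a by rewrite mulr_ge0 // subr_ge0.
have d1 : (t - s) * a <= t - s by rewrite ler_piMr // subr_ge0.
rewrite e1; move: h1 h2 h3 d0 d1.
set A := expR (t * a); set B := expR (- ((t - s) * a)).
set d := (t - s) * a; set E := expR `|t|.
clearbody A B d E => h1 h2 h3 d0 d1.
have hB : 0 <= B - (1 - d) by lra.
have g1 : 0 <= t - s - d by lra.
have g2 : 0 <= E - A by lra.
have g3 : 0 <= t - s by lra.
have := mulr_ge0 (ltW h3) hB.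
have := mulr_ge0 (ltW h3) g1.
have := mulr_ge0 g2 g3.
lra.
Qed.


Section S.
Variables (R : realType) (F : probability R R).
Hypothesis hF : F `[1, +oo[%classic = 1%E.

Definition cl (x : R) : R := Num.max x 1.

Lemma cl_ge1 x : 1 <= cl x.
Proof. by rewrite /cl le_max lexx orbT. Qed.

Lemma mcl : measurable_fun [set: R] cl.
Proof. by apply: measurable_realfun.measurable_maxr. Qed.

Lemma mclinv : measurable_fun [set: R] (fun x => (cl x)^-1).
Proof. exact: (measurableT_comp (minv R) mcl). Qed.

Lemma intb (g : R -> R) (K : R) : measurable_fun [set: R] g ->
  (forall x, `|g x| <= K) -> F.-integrable [set: R] (EFin \o g).
Proof.
move=> mg gK; apply: measurable_bounded_integrable => //.
  by have := probability_setT F => /= ->; rewrite ltry.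
exists K; split; first exact: num_real.
by move=> M KM x _; apply: le_trans (gK x) (ltW KM).
Qed.

Lemma Fnull : F (~` `[1, +oo[%classic) = 0%E.
Proof. by rewrite probability_setC // hF subee. Qed.

Lemma ae_cl (f : R -> R) : measurable_fun [set: R] f ->
  Rintegral F [set: R] f = Rintegral F [set: R] (fun x => f (cl x)).
Proof.
move=> mf; rewrite /Rintegral; congr fine.
apply: ae_eq_integral => //.
- exact/measurable_EFinP.
- apply/measurable_EFinP; exact: (measurableT_comp mf mcl).
exists (~` `[1, +oo[%classic); split => //.
- by apply: measurableC.
- exact: Fnull.
move=> x /= H1 H2; apply: H1 => _.
suff -> : cl x = x by [].
rewrite /cl; apply/max_idPl.
by move: H2; rewrite /= in_itv /= andbT.
Qed.
Definition aa (x : R) : R := 1 - (cl x)^-1.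

Lemma aa_ge0 x : 0 <= aa x.
Proof. by rewrite /aa subr_ge0 invf_le1 // ?cl_ge1 // (lt_le_trans ltr01 (cl_ge1 x)). Qed.

Lemma aa_le1 x : aa x <= 1.
Proof. by rewrite /aa lerBlDr lerDl invr_ge0 (le_trans ler01 (cl_ge1 x)). Qed.

Lemma maa : measurable_fun [set: R] aa.
Proof. by apply: measurable_funB => //; exact: mclinv. Qed.

Lemma mexpa t : measurable_fun [set: R] (fun x => expR (t * aa x)).
Proof.
apply: measurableT_comp; first exact: measurable_expR.
by apply: measurable_funM => //; exact: maa.
Qed.

Lemma iexpa t : F.-integrable [set: R] (EFin \o (fun x => expR (t * aa x))).
Proof.
apply: (intb _ (expR `|t|)); first exact: mexpa.
move=> x; rewrite ger0_norm ?expR_ge0 // ler_expR.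
rewrite (le_trans (ler_norm _)) // normrM (ger0_norm (aa_ge0 x)).
by rewrite ler_piMr // aa_le1.
Qed.

Lemma iaa : F.-integrable [set: R] (EFin \o aa).
Proof.
apply: (intb _ (1)); first exact: maa.
by move=> x; rewrite ger0_norm ?aa_ge0 // aa_le1.
Qed.

Lemma icst (k : R) : F.-integrable [set: R] (EFin \o (fun _ : R => k)).
Proof. by apply: (intb _ (`|k|)). Qed.

Lemma Rint_cst (k : R) : Rintegral F [set: R] (fun _ => k) = k.
Proof.
by rewrite Rintegral_cst //; have := probability_setT F => /= ->; rewrite mulr1.
Qed.

Definition HH t := Rintegral F [set: R] (fun x => expR (t * aa x)).
Definition mm := Rintegral F [set: R] aa.

Lemma HH_lb t : 1 + t * mm <= HH t.
Proof.
rewrite /mm -RintegralZl //; last exact: iaa.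
rewrite -[X in X + _](Rint_cst 1) -RintegralD //; last first.
  apply: (intb _ (`|t|)); first by apply: measurable_funM => //; exact: maa.
  by move=> x; rewrite normrM (ger0_norm (aa_ge0 x)) ler_piMr // aa_le1.
  exact: icst.
apply: le_Rintegral => //.
- apply: (intb _ (1 + `|t|)).
    by apply: measurable_funD => //; apply: measurable_funM => //; exact: maa.
  move=> x; rewrite (le_trans (ler_normD _ _)) // normr1 lerD2l.
  by rewrite normrM (ger0_norm (aa_ge0 x)) ler_piMr // aa_le1.
- exact: iexpa.
by move=> x _; exact: expR_ge1Dx.
Qed.

Lemma HH_le1 t : t <= 0 -> HH t <= 1.
Proof.
move=> t0; rewrite -(Rint_cst 1); apply: le_Rintegral => //.
- exact: iexpa.
- exact: icst.
move=> x _; rewrite -expR0 ler_expR.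
by rewrite mulr_le0_ge0 // aa_ge0.
Qed.

Lemma HH0 : HH 0 = 1.
Proof. by rewrite /HH; under eq_Rintegral do rewrite mul0r expR0; exact: Rint_cst. Qed.
Lemma idiff t s : F.-integrable [set: R]
  (EFin \o (fun x => expR (t * aa x) - expR (s * aa x))).
Proof.
apply: (intb _ (expR `|t| + expR `|s|)).
  by apply: measurable_funB; exact: mexpa.
move=> x; rewrite (le_trans (ler_normB _ _)) // lerD //.
  rewrite ger0_norm ?expR_ge0 // ler_expR (le_trans (ler_norm _)) //.
  by rewrite normrM (ger0_norm (aa_ge0 x)) ler_piMr // aa_le1.
rewrite ger0_norm ?expR_ge0 // ler_expR (le_trans (ler_norm _)) //.
by rewrite normrM (ger0_norm (aa_ge0 x)) ler_piMr // aa_le1.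
Qed.

Lemma HH_inc s t : 0 <= s -> s <= t -> (t - s) * mm <= HH t - HH s.
Proof.
move=> s0 st; rewrite /HH -RintegralB //; try exact: iexpa.
rewrite /mm -RintegralZl //; last exact: iaa.
apply: le_Rintegral => //; last first.
  move=> x _; have a0 := aa_ge0 x.
  have e1 : expR (t * aa x) = expR (s * aa x) * expR ((t - s) * aa x).
    by rewrite -expRD; congr expR; ring.
  have h1 := expR_ge1Dx ((t - s) * aa x).
  have h2 := expR_ge1Dx (s * aa x).
  have d0 : 0 <= (t - s) * aa x by rewrite mulr_ge0 // subr_ge0.
  have sa0 : 0 <= s * aa x by rewrite mulr_ge0.
  rewrite e1; move: h1 h2 d0 sa0.
  set A := expR (s * aa x); set B := expR ((t - s) * aa x).
  set d := (t - s) * aa x; set u := s * aa x.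
  clearbody A B d u => h1 h2 d0 u0.
  have hA : 0 <= A - 1 by lra.
  have hB : 0 <= B - (1 + d) by lra.
  have A0 : 0 <= A by lra.
  have := mulr_ge0 hA d0; have := mulr_ge0 A0 hB.
  lra.
- exact: idiff.
apply: (intb _ `|t - s|); first by apply: measurable_funM => //; exact: maa.
by move=> x; rewrite normrM (ger0_norm (aa_ge0 x)) ler_piMr // aa_le1.
Qed.

Lemma HH_up s t : s <= t -> HH t - HH s <= expR `|t| * (t - s).
Proof.
move=> st; rewrite /HH -RintegralB //; try exact: iexpa.
rewrite -[X in _ <= X](Rint_cst (expR `|t| * (t - s))).
apply: le_Rintegral; [by []|exact: idiff|exact: icst|].
by move=> x _; apply: pw; [exact: st|exact: aa_ge0|exact: aa_le1].
Qed.

Lemma HH_mono s t : s <= t -> HH s <= HH t.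
Proof.
move=> st; apply: le_Rintegral => //; try exact: iexpa.
by move=> x _; rewrite ler_expR ler_wpM2r // aa_ge0.
Qed.
Lemma icl_ge0 x : 0 <= (cl x)^-1.
Proof. by rewrite invr_ge0 (le_trans ler01 (cl_ge1 x)). Qed.

Lemma icl_le1 x : (cl x)^-1 <= 1.
Proof. by rewrite invf_le1 ?cl_ge1 // (lt_le_trans ltr01 (cl_ge1 x)). Qed.

Lemma mEc t : measurable_fun [set: R] (fun x : R => Ecdf (t / x)).
Proof.
rewrite /Ecdf; apply: measurable_funB => //.
apply: measurableT_comp; first exact: measurable_expR.
apply: measurableT_comp => //.
by apply: measurable_funM => //; exact: minv.
Qed.

Lemma mEcl t : measurable_fun [set: R] (fun x : R => expR (- (t / cl x))).
Proof.
apply: measurableT_comp; first exact: measurable_expR.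
apply: measurableT_comp => //.
by apply: measurable_funM => //; exact: mclinv.
Qed.

Lemma surv_eq t : survival (mixcdf F) t = expR (- t) * HH t.
Proof.
rewrite /survival /mixcdf (ae_cl _ (mEc t)) /HH -RintegralZl //; last exact: iexpa.
have -> : (fun x => Ecdf (t / cl x)) = (fun x => 1 - expR (- (t / cl x))) by [].
rewrite RintegralB //; last 2 first.
- exact: icst.
- apply: (intb _ (expR `|t|)); first exact: mEcl.
  move=> x; rewrite ger0_norm ?expR_ge0 // ler_expR (le_trans (ler_norm _)) //.
  rewrite normrN normrM (ger0_norm (icl_ge0 x)) ler_piMr //.
  exact: icl_le1.
rewrite Rint_cst opprB addrC subrK.
apply: eq_Rintegral => x _; rewrite -expRD; congr expR.
by rewrite /aa; ring.
Qed.
Lemma mm_gt0 : mixcdf F <> Ecdf -> 0 < mm.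
Proof.
move=> neq; rewrite lt_def Rintegral_ge0 ?andbT; last by move=> x _; exact: aa_ge0.
apply/eqP => m0; apply: neq; apply/funext => t.
have ae0 : ae_eq F [set: R] (EFin \o aa) (cst 0%E).
  apply/ae_eq_integral_abs => //; first by apply/measurable_EFinP; exact: maa.
  transitivity (\int[F]_x (aa x)%:E)%E.
    by apply: eq_integral => x _ /=; rewrite ger0_norm // aa_ge0.
  have fin : (\int[F]_x (aa x)%:E)%E \is a fin_num.
    exact: (integrable_fin_num _ iaa).
  by rewrite -(fineK fin); move: m0; rewrite /mm /Rintegral => ->.
rewrite /mixcdf (ae_cl _ (mEc t)).
transitivity (Rintegral F [set: R] (fun _ => Ecdf t)); last exact: Rint_cst.
rewrite /Rintegral; congr fine; apply: ae_eq_integral => //.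
- apply/measurable_EFinP; rewrite /Ecdf; apply: measurable_funB => //.
  apply: measurableT_comp; first exact: measurable_expR.
  apply: measurableT_comp => //.
  by apply: measurable_funM => //; exact: mclinv.
apply: filterS ae0 => x /(_ I) /= h _.
have : aa x = 0 by case: h.
rewrite /aa => /eqP; rewrite subr_eq0 => /eqP h1.
by rewrite -h1 mulr1.
Qed.

Lemma HH_cont : continuous HH.
Proof.
move=> x; apply/cvgrPdist_le => e e0.
set K := expR (`|x| + 1).
have K0 : 0 < K by exact: expR_gt0.
have d0 : 0 < Num.min 1 (e / K) by rewrite lt_min ltr01 divr_gt0.
apply/nbhs_ballP; exists (Num.min 1 (e / K)) => // y.
rewrite /ball /= lt_min => /andP[xy1 xyK].
have hK : `|x - y| * K <= e by rewrite -ler_pdivlMr // ltW.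
have hy : expR `|y| <= K.
  rewrite ler_expR; have := ler_normB x (x - y).
  by rewrite opprB addrC subrK; lra.
have hx : expR `|x| <= K by rewrite ler_expR lerDl.
case: (leP y x) => yx.
  have := HH_up _ _ yx; have := HH_mono _ _ yx => h1 h2.
  have g : 0 <= x - y by rewrite subr_ge0.
  rewrite (ger0_norm g) in hK.
  rewrite ger0_norm; last by rewrite subr_ge0.
  have := ler_wpM2r g hx.
  lra.
have yx' := ltW yx.
have := HH_up _ _ yx'; have := HH_mono _ _ yx' => h1 h2.
have g : 0 <= y - x by rewrite subr_ge0.
rewrite distrC (ger0_norm g) in hK.
rewrite distrC ger0_norm; last by rewrite subr_ge0.
have := ler_wpM2r g hy.
lra.
Qed.
Lemma main q : 0 < q < 1 -> mixcdf F <> Ecdf ->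
  exists t : R,
    [/\ 0 <= t,
        survival (mixcdf F) t = q^-1 * Ebar t,
        (forall s : R, 0 <= s -> survival (mixcdf F) s = q^-1 * Ebar s -> s = t)
      & t = Tq q (mixcdf F)].
Proof.
move=> /andP[q0 q1] hne.
have m0 := mm_gt0 hne.
have qi : 1 < q^-1 by rewrite invf_gt1.
have Eb s : Ebar s = expR (- s) by rewrite /Ebar /Ecdf; ring.
have key s : (q^-1 * Ebar s <= survival (mixcdf F) s) = (q^-1 <= HH s).
  by rewrite surv_eq Eb mulrC ler_pM2l // expR_gt0.
have keyeq s : survival (mixcdf F) s = q^-1 * Ebar s <-> HH s = q^-1.
  rewrite surv_eq Eb; split => [h|->]; last by rewrite mulrC.
  by apply: (mulfI (lt0r_neq0 (expR_gt0 (- s)))); rewrite h mulrC.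
set T := (q^-1 - 1) / mm.
have T0 : 0 <= T by rewrite divr_ge0 // ?subr_ge0 ltW.
have HT : q^-1 <= HH T.
  apply: le_trans (HH_lb T); rewrite /T divfK ?gt_eqF //; lra.
have [t tin Ht] : exists2 t, t \in `[0, T] & HH t = q^-1.
  apply: IVT => //.
    by apply: continuous_subspaceT; exact: HH_cont.
  by rewrite HH0; apply/andP; split; [rewrite ge_min ltW | rewrite le_max HT orbT].
move: tin; rewrite in_itv /= => /andP[t0 _].
exists t; split => //.
- by apply/keyeq.
- move=> s s0 /keyeq Hs; case: (ltgtP s t) => // st.
    have := HH_inc _ _ s0 (ltW st); have : 0 < (t - s) * mm by rewrite mulr_gt0 // subr_gt0.
    lra.
  have := HH_inc _ _ t0 (ltW st); have : 0 < (s - t) * mm.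
    by rewrite mulr_gt0 // subr_gt0.
  lra.
rewrite /Tq.
have -> : [set t0 | q^-1 * Ebar t0 <= survival (mixcdf F) t0] = `[t, +oo[%classic.
  apply/seteqP; split => s /=; rewrite key in_itv /= andbT.
    move=> hs; rewrite leNgt; apply/negP => st.
    case: (leP 0 s) => s0.
      have := HH_inc _ _ s0 (ltW st); have : 0 < (t - s) * mm.
        by rewrite mulr_gt0 // subr_gt0.
      lra.
    have := HH_le1 _ (ltW s0); lra.
  by move=> ts; rewrite -Ht; apply: HH_mono.
by rewrite inf_itv.
Qed.
End S.

Theorem lemma4p1 (R : realType) (q : R) (F : probability R R) :
  0 < q < 1 ->
  F `[1, +oo[%classic = 1%E ->
  mixcdf F <> Ecdf ->
  exists t : R,
    [/\ 0 <= t,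
        survival (mixcdf F) t = q^-1 * Ebar t,
        (forall s : R, 0 <= s -> survival (mixcdf F) s = q^-1 * Ebar s -> s = t)
      & t = Tq q (mixcdf F)].
Proof. by move=> hq hF hne; exact: (@main R F hF q hq hne). Qed.
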